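(* For every restriction category $\mathbb{X}$, the category $\mathbf{L}[\mathbb{X}]$ with the assignment $\mathsf{L}(A,a)=(A,\mathrm{id}_A)$ and $\eta_{(A,a)}=a:(A,a)\to(A,\mathrm{id}_A)$ is a local category.
   Context: Composition is diagrammatic ($fg$ = first $f$ then $g$). A restriction category is a category $\mathbb{X}$ with an assignment to each $f:A\to B$ of $\bar f:A\to A$ such that: $\bar ff=f$; $\bar f\bar g=\bar g\bar f$ and $\bar g\bar f=\overline{\bar gf}$ for $f:A\to B$, $g:A\to C$; $f\bar g=\overline{fg}f$ for $f:A\to B$, $g:B\to C$. A restriction idempotent is $a:A\to A$ with $a=\bar a$. $\mathbf{L}[\mathbb{X}]$ is the category whose objects are pairs $(A,a)$ with $a$ a restriction idempotent on $A$, whose morphisms $f:(A,a)\to(B,b)$ are morphisms $f:A\to B$ of $\mathbb{X}$ with $\bar f=a$ and $fb=f$, with identity on $(A,a)$ given by $a$ and composition as in $\mathbb{X}$. A local category is a category $\mathbb{C}$ with, for each object $M$, an object $\mathsf{L}M$ and a morphism $\eta_M:M\to\mathsf{L}M$ such that (L.1) $\mathsf{L}\mathsf{L}M=\mathsf{L}M$ and $\eta_{\mathsf{L}M}=\mathrm{id}_{\mathsf{L}M}$; (L.2) each $\eta_M$ is monic; (L.3) for every $M$ and every morphism $f:N\to\mathsf{L}M$ a pullback of $\eta_M$ along $f$ exists, with leg $m:P\to N$, such that $\mathsf{L}P=\mathsf{L}N$ and $m\eta_N=\eta_P$. *)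

(* Defs.v *)
From Stdlib Require Import ProofIrrelevance.

(* Categories with diagrammatic composition: comp f g = "first f then g". *)
Record Category := {
  Ob :> Type;
  Hom : Ob -> Ob -> Type;
  idm : forall A, Hom A A;
  comp : forall A B C, Hom A B -> Hom B C -> Hom A C;
  comp_id_l : forall A B (f : Hom A B), comp A A B (idm A) f = f;
  comp_id_r : forall A B (f : Hom A B), comp A B B f (idm B) = f;
  comp_assoc : forall A B C D (f : Hom A B) (g : Hom B C) (h : Hom C D),
      comp A C D (comp A B C f g) h = comp A B D f (comp B C D g h)
}.
Arguments Hom {c} _ _.
Arguments idm {c} A.
Arguments comp {c A B C} _ _.

Record RestrictionCategory := {
  rc_cat :> Category;
  rbar : forall (A B : rc_cat), Hom A B -> Hom A A;
  R1 : forall (A B : rc_cat) (f : Hom A B), comp (rbar A B f) f = f;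
  R2 : forall (A B C : rc_cat) (f : Hom A B) (g : Hom A C),
      comp (rbar A B f) (rbar A C g) = comp (rbar A C g) (rbar A B f);
  R3 : forall (A B C : rc_cat) (f : Hom A B) (g : Hom A C),
      comp (rbar A C g) (rbar A B f) = rbar A B (comp (rbar A C g) f);
  R4 : forall (A B C : rc_cat) (f : Hom A B) (g : Hom B C),
      comp f (rbar B C g) = comp (rbar A C (comp f g)) f
}.
Arguments rbar {r A B} _.

Section LX.
Variable X : RestrictionCategory.

Record LOb := mkLOb { lo_obj : X; lo_idem : Hom lo_obj lo_obj;
                      lo_ridem : rbar lo_idem = lo_idem }.

Definition LHom (a b : LOb) : Type :=
  { f : Hom (lo_obj a) (lo_obj b) | rbar f = lo_idem a /\ comp f (lo_idem b) = f }.

Lemma rbar_comp_eq (A B C : X) (f : Hom A B) (g : Hom B C) (b : Hom B B) :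
  rbar g = b -> comp f b = f -> rbar (comp f g) = rbar f.
Proof.
  intros Hg Hf.
  assert (E1 : comp (rbar f) (rbar (comp f g)) = rbar (comp f g)).
  { rewrite (R3 X _ _ _ (comp f g) f), <- comp_assoc, R1. reflexivity. }
  assert (E2 : comp (rbar (comp f g)) f = f).
  { rewrite <- R4, Hg, Hf. reflexivity. }
  assert (E3 : comp (rbar (comp f g)) (rbar f) = rbar f).
  { rewrite (R3 X _ _ _ f (comp f g)), E2. reflexivity. }
  rewrite <- E1, R2, E3. reflexivity.
Qed.

Definition Lid (a : LOb) : LHom a a.
Proof.
  exists (lo_idem a). split.
  - exact (lo_ridem a).
  - pattern (lo_idem a) at 1. rewrite <- (lo_ridem a). apply R1.
Defined.

Definition Lcomp {a b c : LOb} (f : LHom a b) (g : LHom b c) : LHom a c.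
Proof.
  exists (comp (proj1_sig f) (proj1_sig g)). split.
  - rewrite (@rbar_comp_eq _ _ _ (proj1_sig f) (proj1_sig g) _ (proj1 (proj2_sig g))
               (proj2 (proj2_sig f))).
    exact (proj1 (proj2_sig f)).
  - rewrite comp_assoc, (proj2 (proj2_sig g)). reflexivity.
Defined.

Lemma LHom_eq (a b : LOb) (f g : LHom a b) : proj1_sig f = proj1_sig g -> f = g.
Proof.
  destruct f as [f Hf], g as [g Hg]; simpl; intros ->.
  f_equal; apply proof_irrelevance.
Qed.

Lemma Lcomp_id_l (a b : LOb) (f : LHom a b) : Lcomp (a:=a) (b:=a) (Lid a) f = f.
Proof.
  apply LHom_eq; simpl. destruct f as [f [Hf1 Hf2]]; simpl.
  rewrite <- Hf1. apply R1.
Qed.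

Lemma Lcomp_id_r (a b : LOb) (f : LHom a b) : Lcomp (b:=b) f (Lid b) = f.
Proof.
  apply LHom_eq; simpl. destruct f as [f [Hf1 Hf2]]; exact Hf2.
Qed.

Lemma Lcomp_assoc (a b c d : LOb) (f : LHom a b) (g : LHom b c) (h : LHom c d) :
  Lcomp (Lcomp (b:=b) f g) h = Lcomp f (Lcomp (b:=c) g h).
Proof. apply LHom_eq; simpl. apply comp_assoc. Qed.

Definition Lcat : Category :=
  {| Ob := LOb; Hom := LHom; idm := Lid; comp := @Lcomp;
     comp_id_l := Lcomp_id_l; comp_id_r := Lcomp_id_r;
     comp_assoc := Lcomp_assoc |}.

Lemma rbar_id (A : X) : rbar (idm A) = idm A.
Proof. rewrite <- (comp_id_r _ _ _ (rbar (idm A))). apply R1. Qed.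

Definition Lfun (a : LOb) : LOb := @mkLOb (lo_obj a) (idm (lo_obj a)) (rbar_id (lo_obj a)).

Definition Leta (a : LOb) : LHom a (Lfun a).
Proof.
  exists (lo_idem a). split.
  - exact (lo_ridem a).
  - simpl. apply comp_id_r.
Defined.

End LX.

Definition monic {C : Category} {A B : C} (m : Hom A B) : Prop :=
  forall (Q : C) (g h : Hom Q A), comp g m = comp h m -> g = h.

Definition is_pullback {C : Category} {P N M Z : C}
  (m : Hom P N) (p : Hom P M) (f : Hom N Z) (g : Hom M Z) : Prop :=
  comp m f = comp p g /\
  forall (Q : C) (u : Hom Q N) (v : Hom Q M), comp u f = comp v g ->
    exists! w : Hom Q P, comp w m = u /\ comp w p = v.

(* Local category (L.1)-(L.3). Object equalities are used to transport
   morphisms via eq_rect. *)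
Definition is_local (C : Category) (L : C -> C) (eta : forall M : C, Hom M (L M)) : Prop :=
  (forall M : C, exists e : L (L M) = L M,
      eq_rect (L (L M)) (fun Y => Hom (L M) Y) (eta (L M)) (L M) e = idm (L M))
  /\ (forall M : C, monic (eta M))
  /\ (forall (M N : C) (f : Hom N (L M)),
        exists (P : C) (m : Hom P N) (p : Hom P M),
          is_pullback m p f (eta M) /\
          exists e : L P = L N,
            eq_rect (L P) (fun Y => Hom P Y) (eta P) (L N) e = comp m (eta N)).

(* Main.v *)
Require Import Defs.
From Stdlib Require Import Setoid.

Section H.
Variable X : RestrictionCategory.

Lemma rr_idem (A B : X) (x : Hom A B) : comp (rbar x) (rbar x) = rbar x.
Proof. rewrite (R3 X _ _ _ x x), R1. reflexivity. Qed.

Lemma rr (A B : X) (x : Hom A B) : rbar (rbar x) = rbar x.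
Proof.
  rewrite <- (R1 X _ _ (rbar x)) at 2.
  rewrite R2, (R3 X _ _ _ (rbar x) x), rr_idem. reflexivity.
Qed.

Lemma idem_of (A : X) (a : Hom A A) : rbar a = a -> comp a a = a.
Proof. intro H. rewrite <- H at 1. apply R1. Qed.

Lemma key1 (A B : X) (f : Hom A B) (a : Hom B B) : rbar a = a ->
  comp (rbar (comp f a)) f = comp f a.
Proof. intro H. rewrite <- R4, H. reflexivity. Qed.

Lemma key2 (A B : X) (f : Hom A B) (a : Hom B B) : rbar a = a ->
  comp (rbar (comp f a)) (rbar f) = rbar (comp f a).
Proof. intro H. rewrite (R3 X _ _ _ f (comp f a)), key1 by exact H. reflexivity. Qed.
End H.

Theorem proposition4p3 (X : RestrictionCategory) :
  @is_local (Lcat X) (Lfun X) (Leta X).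
Proof.
  split; [|split].
  - intros M. exists eq_refl. simpl. apply LHom_eq. reflexivity.
  - intros M Q g h Hgh.
    destruct g as [g [g1 g2]], h as [h [h1 h2]]. apply LHom_eq. simpl.
    apply (f_equal (@proj1_sig _ _)) in Hgh. simpl in Hgh.
    rewrite <- g2, <- h2. exact Hgh.
  - intros [A a Ha] [N n Hn] [f [Hf1 Hf2]]. simpl in *.
    set (r := rbar (comp f a)).
    assert (Hr : rbar r = r) by apply rr.
    assert (Hrn : comp r n = r) by (unfold r; rewrite <- Hf1; apply key2; exact Ha).
    assert (Hrf : comp r f = comp f a) by (apply key1; exact Ha).
    assert (Haa : comp a a = a) by (apply idem_of; exact Ha).
    pose (P := @mkLOb X N r Hr).
    assert (Hm : rbar r = r /\ comp r n = r) by (split; assumption).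
    pose (m := exist _ r Hm : LHom X P (@mkLOb X N n Hn)).
    assert (Hp : rbar (comp f a) = r /\ comp (comp f a) a = comp f a)
      by (split; [reflexivity| rewrite comp_assoc, Haa; reflexivity]).
    pose (p := exist _ (comp f a) Hp : LHom X P (@mkLOb X A a Ha)).
    exists P, m, p. split; [split|].
    + apply LHom_eq. simpl. rewrite Hrf, comp_assoc, Haa. reflexivity.
    + intros [Q q Hq] [u [Hu1 Hu2]] [v [Hv1 Hv2]] Huv.
      apply (f_equal (@proj1_sig _ _)) in Huv. simpl in *.
      assert (Hw : rbar u = q /\ comp u r = u).
      { split; [exact Hu1|]. unfold r. rewrite R4, <- comp_assoc, Huv, !Hv2, Hv1.
        rewrite <- Hu1. apply R1. }
      exists (exist _ u Hw : LHom X (@mkLOb X Q q Hq) P). split.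
      * split; apply LHom_eq; simpl.
        -- exact (proj2 Hw).
        -- rewrite <- comp_assoc, Huv, !Hv2. reflexivity.
      * intros [w' [Hw1 Hw2]] [E1 E2]. apply LHom_eq. simpl.
        apply (f_equal (@proj1_sig _ _)) in E1. simpl in E1.
        rewrite <- E1. simpl in Hw2. exact Hw2.
    + exists eq_refl. apply LHom_eq. simpl. symmetry. exact Hrn.
Qed.
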